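(* Let $G$ be the group given by the presentation $P=\langle x_1,\ldots,x_n\mid r_1^{a_1},\ldots,r_m^{a_m}\rangle$, where each $r_i$ is an element of the free group $F_n$ on $x_1,\ldots,x_n$ that is not a proper power, and let $\varphi:F_n\to G$ be the canonical map. Suppose there exist a residually finite group $N$ and a homomorphism $\psi:G\to N$ such that the order of $\psi(\varphi(r_i))$ in $N$ is $a_i$ for all $1\le i\le m$. Then \[rdef(P)=n-\sum_{i=1}^m\frac1{a_i}.\]
   Context: For the presentation $P$, let $R_G$ be the finite residual of $G$ (intersection of all finite index subgroups) and $k_i$ the order of $\varphi(r_i)R_G$ in $G/R_G$; the residual deficiency of $P$ is $rdef(P)=n-\sum_{i=1}^m 1/k_i$. *)

(* Defs.v *)
From HB Require Import structures.
From mathcomp Require Import all_boot all_order all_algebra.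
From Stdlib Require Import ClassicalEpsilon.
Set Implicit Arguments. Unset Strict Implicit. Unset Printing Implicit Defensive.
Import GRing.Theory Num.Theory.

(* Abstract (possibly infinite) groups. *)
Record group := Group {
  carrier :> Type;
  gmul : carrier -> carrier -> carrier;
  ginv : carrier -> carrier;
  gone : carrier;
  gmulA : forall x y z, gmul x (gmul y z) = gmul (gmul x y) z;
  gmul1g : forall x, gmul gone x = x;
  gmulg1 : forall x, gmul x gone = x;
  gmulVg : forall x, gmul (ginv x) x = gone;
  gmulgV : forall x, gmul x (ginv x) = gone }.

Arguments gmul {g}. Arguments ginv {g}. Arguments gone {g}.

Fixpoint gpow (G : group) (g : G) (k : nat) : G :=
  match k with O => gone | S k' => gmul g (gpow g k') end.

Definition is_hom (G H : group) (f : G -> H) : Prop :=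
  forall x y, f (gmul x y) = gmul (f x) (f y).

Definition subgroup (G : group) (S : G -> Prop) : Prop :=
  S gone /\ (forall x y, S x -> S y -> S (gmul x y)) /\ (forall x, S x -> S (ginv x)).

Definition normal_subgroup (G : group) (S : G -> Prop) : Prop :=
  subgroup S /\ forall g x, S x -> S (gmul (ginv g) (gmul x g)).

Definition finite_index (G : group) (S : G -> Prop) : Prop :=
  exists s : seq G, forall g : G, exists c, List.In c s /\ S (gmul (ginv c) g).

Definition normal_closure (G : group) (A : G -> Prop) : G -> Prop :=
  fun w => forall K : G -> Prop, normal_subgroup K -> (forall u, A u -> K u) -> K w.

Definition finite_residual (G : group) : G -> Prop :=
  fun g => forall H : G -> Prop, subgroup H -> finite_index H -> H g.

Definition residually_finite (G : group) : Prop :=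
  forall g : G, g <> gone ->
    exists H : G -> Prop, normal_subgroup H /\ finite_index H /\ ~ H g.

Definition free_on (F : group) (n : nat) (x : 'I_n -> F) : Prop :=
  forall (H : group) (f : 'I_n -> H),
    (exists h : F -> H, is_hom h /\ forall i, h (x i) = f i) /\
    (forall h1 h2 : F -> H, is_hom h1 -> is_hom h2 ->
       (forall i, h1 (x i) = f i) -> (forall i, h2 (x i) = f i) ->
       forall w, h1 w = h2 w).

Definition proper_power (G : group) (r : G) : Prop :=
  exists (s : G) (k : nat), (2 <= k)%N /\ r = gpow s k.

Definition has_order (G : group) (g : G) (k : nat) : Prop :=
  (0 < k)%N /\ gpow g k = gone /\ forall j, (0 < j < k)%N -> gpow g j <> gone.

Definition presents (F G : group) (m : nat) (r : 'I_m -> F) (a : 'I_m -> nat)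
    (phi : F -> G) : Prop :=
  is_hom phi /\ (forall g : G, exists w, phi w = g) /\
  (forall w, phi w = gone <->
     normal_closure (fun u => exists i, u = gpow (r i) (a i)) w).

(* order of the coset gR in G/R (R normal): least k>0 with g^k in R *)
Definition coset_order_is (G : group) (R : G -> Prop) (g : G) (k : nat) : Prop :=
  (0 < k)%N /\ R (gpow g k) /\ forall j, (0 < j < k)%N -> ~ R (gpow g j).

(* the order as a nat; 0 encodes infinite order (then 1/0 = 0 in rat) *)
Definition coset_order (G : group) (R : G -> Prop) (g : G) : nat :=
  epsilon (inhabits 0%N) (fun k => coset_order_is R g k).

Local Open Scope ring_scope.

Definition rdef (F G : group) (n m : nat) (r : 'I_m -> F) (phi : F -> G) : rat :=
  n%:R - \sum_(i < m) ((coset_order (@finite_residual G) (phi (r i)))%:R)^-1.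

(* Main.v *)
Require Import Defs.
From mathcomp Require Import all_boot all_order all_algebra.
From Stdlib Require Import ClassicalEpsilon.
Import GRing.Theory Num.Theory.
Local Open Scope ring_scope.

Section GL.
Variable G : group.
Lemma inv_uniq (u v : G) : gmul u v = gone -> u = ginv v.
Proof. move=> H. by rewrite -(gmulg1 u) -(gmulgV v) gmulA H gmul1g. Qed.
Lemma invK (c : G) : ginv (ginv c) = c.
Proof. by symmetry; apply: inv_uniq; rewrite gmulgV. Qed.
Lemma invM (x y : G) : ginv (gmul x y) = gmul (ginv y) (ginv x).
Proof.
symmetry; apply: inv_uniq.
by rewrite -gmulA (gmulA (ginv x)) gmulVg gmul1g gmulVg.
Qed.
End GL.

Lemma hom1 (G H : group) (f : G -> H) : is_hom f -> f gone = gone.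
Proof.
move=> hf. have E: gmul (f gone) (f gone) = f gone by rewrite -hf gmul1g.
transitivity (gmul (gmul (ginv (f gone)) (f gone)) (f gone)).
  by rewrite gmulVg gmul1g.
by rewrite -gmulA E gmulVg.
Qed.

Lemma homV (G H : group) (f : G -> H) x : is_hom f -> f (ginv x) = ginv (f x).
Proof. move=> hf; apply: inv_uniq; by rewrite -hf gmulVg hom1. Qed.

Lemma homX (G H : group) (f : G -> H) x k : is_hom f -> f (gpow x k) = gpow (f x) k.
Proof. move=> hf; elim: k => [|k IH] /=; first exact: hom1. by rewrite hf IH. Qed.

Lemma coset_order_uniq (G : group) (R : G -> Prop) g k1 k2 :
  coset_order_is R g k1 -> coset_order_is R g k2 -> k1 = k2.
Proof.
move=> [p1 [r1 n1]] [p2 [r2 n2]].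
case: (ltngtP k1 k2) => // h.
- by exfalso; apply: (n2 k1) => //; rewrite p1 h.
- by exfalso; apply: (n1 k2) => //; rewrite p2 h.
Qed.

Theorem mainTheorem11 (n m : nat) (F : group) (x : 'I_n -> F)
  (r : 'I_m -> F) (a : 'I_m -> nat) (G : group) (phi : F -> G)
  (N : group) (psi : G -> N) :
  free_on x ->
  (forall i, ~ proper_power (r i)) ->
  presents r a phi ->
  residually_finite N ->
  is_hom psi ->
  (forall i, has_order (psi (phi (r i))) (a i)) ->
  rdef n r phi = n%:R - \sum_(i < m) ((a i)%:R)^-1.
Proof.
move=> _ _ [hphi [_ hker]] hN hpsi hord.
rewrite /rdef; congr (_ - _); apply: eq_bigr => i _.
suff Hc: coset_order_is (@finite_residual G) (phi (r i)) (a i).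
  rewrite /coset_order.
  have := epsilon_spec (inhabits 0%N) (fun k => coset_order_is (@finite_residual G) (phi (r i)) k)
     (ex_intro _ _ Hc).
  by move=> He; rewrite (coset_order_uniq _ _ _ _ _ He Hc).
have [pa [ha nh]] := hord i.
split => //; split.
  rewrite -homX //; have -> : phi (gpow (r i) (a i)) = gone.
    by apply/hker => K _ HA; apply: HA; exists i.
  by move=> H [h1 _] _.
move=> j hj Rj.
have hne := nh j hj.
have [H [[[H1 [HM HV]] _] [[s hs] nH]]] := hN _ hne.

pose f c := epsilon (inhabits gone) (fun g : G => H (gmul (ginv c) (psi g))).
apply: nH; rewrite -homX //; apply: (Rj (fun g => H (psi g))).
  split; first by rewrite hom1.
  split; first by move=> u v hu hv; rewrite hpsi; apply: HM.
  by move=> u hu; rewrite homV //; apply: HV.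
exists (map f s) => g.
have [c [cin hc]] := hs (psi g).
have fc : H (gmul (ginv c) (psi (f c))) := (epsilon_spec (inhabits gone) (fun g0 : G => H (gmul (ginv c) (psi g0))) (ex_intro _ g hc)).
exists (f c); split; first exact: List.in_map.
rewrite hpsi homV //.
have := HM _ _ (HV _ fc) hc.
by rewrite invM invK -gmulA (gmulA c) gmulgV gmul1g.
Qed.
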